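(* Let $p\ge 7$ be a prime and $k$ an integer with $(p+2)/3\le k\le p-3$. Then \[ k+1\le \mathsf{BO}(k,\mathbb{Z}/p\mathbb{Z})\le k+2. \]
   Context: For a positive integer $k$, a set $\{g_1,\dots,g_k\}$ of $k$ distinct elements of a finite abelian group $G$ (written additively) is called $k$-barycentric if $\sum_{i=1}^k g_i = k\,g_j$ for some $1\le j\le k$. The $k$-th barycentric Olson constant $\mathsf{BO}(k,G)$ is the smallest integer $\ell$ such that every subset $A\subseteq G$ with $|A|\ge \ell$ contains a $k$-barycentric subset (so that always $\mathsf{BO}(k,G)\le |G|+1$). *)

(* Defs.v *)
From HB Require Import structures.
From mathcomp Require Import all_boot all_order all_algebra.
Set Implicit Arguments. Unset Strict Implicit. Unset Printing Implicit Defensive.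
Import GRing.Theory.
Local Open Scope ring_scope.

Definition barycentric (G : finZmodType) (k : nat) (B : {set G}) : bool :=
  (#|B| == k)%N && [exists g in B, \sum_(x in B) x == g *+ k].

Definition has_barycentric (G : finZmodType) (k : nat) (A : {set G}) : bool :=
  [exists B : {set G}, (B \subset A) && barycentric k B].

Definition BO_prop (G : finZmodType) (k l : nat) : bool :=
  [forall A : {set G}, (l <= #|A|)%N ==> has_barycentric k A].

Lemma BO_prop_ex (G : finZmodType) (k : nat) : exists l, BO_prop G k l.
Proof.
exists (#|G|.+1); apply/forallP => A; apply/implyP => H.
by move: (max_card A); rewrite leqNgt H.
Qed.

Definition BO (G : finZmodType) (k : nat) : nat := ex_minn (BO_prop_ex G k).

(* Main.v *)
Require Import Defs.
From mathcomp Require Import all_boot all_order all_algebra.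
From mathcomp Require Import all_field zify ring.
From Stdlib Require Import Classical.
Set Implicit Arguments. Unset Strict Implicit. Unset Printing Implicit Defensive.
Import GRing.Theory.
Local Open Scope ring_scope.

Section Lag.
Variable F : finFieldType.

Definition wt (A : {set F}) (x : F) := (\prod_(y in A :\ x) (x - y))^-1.

Definition lpol (A : {set F}) (x : F) : {poly F} := \prod_(y in A :\ x) ('X - y%:P).

Lemma lpol_size (A : {set F}) (x : F) : x \in A -> size (lpol A x) = #|A|.
Proof.
move=> xA; rewrite /lpol -big_enum size_prod_XsubC -cardE.
by rewrite (cardsD1 x A) xA.
Qed.

Lemma lpol_monic (A : {set F}) (x : F) : lpol A x \is monic.
Proof. by rewrite /lpol -big_enum monic_prod_XsubC. Qed.

Lemma lpol_eval (A : {set F}) (x z : F) : (lpol A x).[z] = \prod_(y in A :\ x) (z - y).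
Proof.
rewrite /lpol -big_enum horner_prod big_enum; apply: eq_bigr => y _.
by rewrite hornerXsubC.
Qed.

Lemma prod_nz (A : {set F}) (x : F) : \prod_(y in A :\ x) (x - y) != 0.
Proof.
apply/prodf_neq0 => y; rewrite !inE => /andP[yx _].
by rewrite subr_eq0 eq_sym.
Qed.

Lemma lagr_coef (A : {set F}) (e : nat) : (e < #|A|)%N ->
  \sum_(x in A) x ^+ e * wt A x = (e == #|A|.-1)%:R.
Proof.
move=> he.
pose q := \sum_(x in A) (x ^+ e * wt A x) *: lpol A x.
have qE : q = 'X^e.
  apply/eqP; rewrite -subr_eq0; apply/negPn/negP => nz.
  have := max_poly_roots nz (rs := enum A).
  have Hr : all (root (q - 'X^e)) (enum A).
    apply/allP => z; rewrite mem_enum => zA.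
    rewrite /root hornerD hornerN hornerXn /q horner_sum.
    rewrite (bigD1 z) //= big1 ?addr0.
      rewrite hornerZ lpol_eval /wt -mulrA mulVf ?prod_nz // mulr1.
      by rewrite subrr.
    move=> y /andP[yA yz]; rewrite hornerZ lpol_eval.
    rewrite (bigD1 z) /= ?subrr ?mul0r ?mulr0 //.
    by rewrite !inE zA andbT eq_sym.
  move=> /(_ Hr (enum_uniq _)); rewrite -cardE.
  apply/negP; rewrite -leqNgt.
  apply: leq_trans (size_polyD _ _) _; rewrite geq_max size_polyN size_polyXn he andbT.
  apply: leq_trans (size_sum _ _ _) _.
  apply/bigmax_leqP => x xA; apply: leq_trans (size_scale_leq _ _) _.
  by rewrite lpol_size.
have := congr1 (fun r : {poly F} => r`_(#|A|.-1)) qE.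
rewrite coef_sum coefXn /= eq_sym => <-; apply: eq_bigr => x xA.
rewrite coefZ.
have := lpol_monic A x; rewrite monicE /lead_coef lpol_size // => /eqP ->.
by rewrite mulr1.
Qed.
End Lag.

Section Tri.
Variable F : finFieldType.
Variables A1 A2 A3 : {set F}.

Definition LL (G : F -> F -> F -> F) :=
  \sum_(x in A1) \sum_(y in A2) \sum_(z in A3) G x y z * (wt A1 x * wt A2 y * wt A3 z).

Lemma LL_ext G1 G2 : (forall x y z, x \in A1 -> y \in A2 -> z \in A3 -> G1 x y z = G2 x y z) ->
  LL G1 = LL G2.
Proof.
move=> H; apply: eq_bigr => x xA; apply: eq_bigr => y yA; apply: eq_bigr => z zA.
by rewrite H.
Qed.

Lemma LL_sum (I : Type) (r : seq I) (P : pred I) (G : I -> F -> F -> F -> F) :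
  LL (fun x y z => \sum_(i <- r | P i) G i x y z) = \sum_(i <- r | P i) LL (G i).
Proof.
rewrite /LL /=.
symmetry; rewrite exchange_big; apply: eq_bigr => x _.
rewrite exchange_big; apply: eq_bigr => y _.
rewrite exchange_big; apply: eq_bigr => z _.
exact: (esym (mulr_suml _ _ _ _)).
Qed.

Lemma LL_scale c G : LL (fun x y z => c * G x y z) = c * LL G.
Proof.
rewrite /LL mulr_sumr; apply: eq_bigr => x _; rewrite mulr_sumr; apply: eq_bigr => y _.
rewrite mulr_sumr; apply: eq_bigr => z _; by rewrite mulrA.
Qed.

Lemma LL_sub G1 G2 : LL (fun x y z => G1 x y z - G2 x y z) = LL G1 - LL G2.
Proof.
rewrite /LL -sumrB; apply: eq_bigr => x _; rewrite -sumrB; apply: eq_bigr => y _.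
rewrite -sumrB; apply: eq_bigr => z _; by rewrite mulrBl.
Qed.

Lemma LL_add G1 G2 : LL (fun x y z => G1 x y z + G2 x y z) = LL G1 + LL G2.
Proof.
rewrite /LL -big_split; apply: eq_bigr => x _; rewrite -big_split; apply: eq_bigr => y _.
rewrite -big_split; apply: eq_bigr => z _; by rewrite mulrDl.
Qed.

Lemma LL_mono0 i j l : LL (fun x y z => x ^+ i * y ^+ j * z ^+ l) =
  (\sum_(x in A1) x ^+ i * wt A1 x) * (\sum_(y in A2) y ^+ j * wt A2 y) *
  (\sum_(z in A3) z ^+ l * wt A3 z).
Proof.
rewrite /LL -mulrA mulr_suml; apply: eq_bigr => x _.
rewrite mulr_suml mulr_sumr; apply: eq_bigr => y _.
rewrite mulr_sumr mulr_sumr; apply: eq_bigr => z _.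
ring.
Qed.

Lemma M0 (A : {set F}) e : (e < #|A|.-1)%N -> \sum_(x in A) x ^+ e * wt A x = 0.
Proof.
move=> h; rewrite lagr_coef; last by apply: (leq_trans h); apply: leq_pred.
by rewrite (ltn_eqF h).
Qed.

Lemma LL_mono a b c i j l : #|A1| = a.+1 -> #|A2| = b.+1 -> #|A3| = c.+1 ->
  (i + j + l <= a + b + c)%N ->
  LL (fun x y z => x ^+ i * y ^+ j * z ^+ l) = ((i == a) && (j == b) && (l == c))%:R.
Proof.
move=> h1 h2 h3 hs; rewrite LL_mono0.
have [hi|hi] := ltnP i a.
  by rewrite M0 ?h1 // !mul0r (ltn_eqF hi).
have [hj|hj] := ltnP j b.
  by rewrite (M0 (A:=A2)) ?h2 // !(mul0r, mulr0) (ltn_eqF hj) andbF.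
have [hl|hl] := ltnP l c.
  by rewrite (M0 (A:=A3)) ?h3 // !(mul0r, mulr0) (ltn_eqF hl) andbF.
have ei : i = a by lia.
have ej : j = b by lia.
have el : l = c by lia.
subst.
by rewrite !lagr_coef ?h1 ?h2 ?h3 // !eqxx !mulr1.
Qed.
End Tri.

Section Term.
Variable F : finFieldType.
Variables A1 A2 A3 : {set F}.

Lemma expand3 (x y z : F) (e1 e2 e3 m k : nat) :
  x ^+ e1 * y ^+ e2 * z ^+ e3 * (x + y + z *+ k) ^+ m =
  \sum_(i < m.+1) \sum_(j < (m - i).+1)
     ((('C(m, i) * 'C(m - i, j))%:R * (k%:R) ^+ i) *
      (x ^+ (e1 + (m - i - j)) * y ^+ (e2 + j) * z ^+ (e3 + i))).
Proof.
have -> : (x + y + z *+ k) ^+ m = \sum_(i < m.+1) (x + y) ^+ (m - i) * (z *+ k) ^+ i *+ 'C(m, i).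
  by rewrite exprDn.
rewrite mulr_sumr; apply: eq_bigr => -[i hi] _ /=.
have -> : (x + y) ^+ (m - i) = \sum_(j < (m - i).+1) x ^+ (m - i - j) * y ^+ j *+ 'C(m - i, j).
  by rewrite exprDn.
rewrite -mulr_natr mulr_suml mulr_suml mulr_sumr; apply: eq_bigr => -[j hj] _ /=.
rewrite (exprD x e1) (exprD y e2) (exprD z e3) -[z *+ k]mulr_natl exprMn natrM.
ring.
Qed.

Lemma LL_term (a b c e1 e2 e3 m k : nat) :
  #|A1| = a.+1 -> #|A2| = b.+1 -> #|A3| = c.+1 ->
  (e1 <= a)%N -> (e2 <= b)%N -> (e3 <= c)%N -> (a + b + c = m + e1 + e2 + e3)%N ->
  LL A1 A2 A3 (fun x y z => x ^+ e1 * y ^+ e2 * z ^+ e3 * (x + y + z *+ k) ^+ m) =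
  ('C(m, c - e3) * 'C(m - (c - e3), b - e2))%:R * (k%:R) ^+ (c - e3).
Proof.
move=> h1 h2 h3 he1 he2 he3 hs.
rewrite (LL_ext (G2 := fun x y z => \sum_(i < m.+1) \sum_(j < (m - i).+1)
     ((('C(m, i) * 'C(m - i, j))%:R * (k%:R) ^+ i) *
      (x ^+ (e1 + (m - i - j)) * y ^+ (e2 + j) * z ^+ (e3 + i))))); last first.
  by move=> x y z _ _ _; apply: expand3.
rewrite LL_sum.
have hi0 : (c - e3 < m.+1)%N by lia.
rewrite (bigD1 (Ordinal hi0)) //= big1 ?addr0; last first.
  move=> i /eqP hi; rewrite LL_sum big1 // => j _.
  rewrite LL_scale (LL_mono h1 h2 h3); last first.
    have := ltn_ord i; have := ltn_ord j; lia.
  have -> : (e3 + i == c)%N = false.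
    by apply/negbTE/eqP => hc; apply: hi; apply: val_inj => /=; lia.
  by rewrite andbF mulr0.
rewrite LL_sum.
have hj0 : (b - e2 < (m - (c - e3)).+1)%N by lia.
rewrite (bigD1 (Ordinal hj0)) //= big1 ?addr0; last first.
  move=> j /eqP hj.
  rewrite LL_scale (LL_mono h1 h2 h3); last first.
    have := ltn_ord j; lia.
  have -> : (e2 + j == b)%N = false.
    by apply/negbTE/eqP => hb; apply: hj; apply: val_inj => /=; lia.
  by rewrite andbF andFb mulr0.
rewrite LL_scale (LL_mono h1 h2 h3); last by lia.
have -> : (e1 + (m - (c - e3) - (b - e2)) == a)%N by apply/eqP; lia.
have -> : (e2 + (b - e2) == b)%N by apply/eqP; lia.
have -> : (e3 + (c - e3) == c)%N by apply/eqP; lia.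
by rewrite mulr1.
Qed.
End Term.

Section Fp.
Variable p : nat.
Hypothesis hp : prime p.

Lemma natFp0 n : ((n%:R : 'F_p) == 0) = (p %| n)%N.
Proof.
apply/eqP/idP => [h|h].
  have := val_Fp_nat hp n; rewrite h /= => e.
  by rewrite /dvdn -e.
by rewrite -Fp_nat_mod // (eqP h).
Qed.

Lemma natFp_neq0 n : (0 < n < p)%N -> (n%:R : 'F_p) != 0.
Proof.
move=> /andP[h1 h2]; rewrite natFp0; apply/negP => /dvdn_leq => /(_ h1).
by rewrite leqNgt h2.
Qed.

Lemma fermat (w : 'F_p) : w != 0 -> w ^+ p.-1 = 1.
Proof.
move=> nz; have := expf_card w; rewrite card_Fp // => h.
have : w ^+ (p.-1).+1 = w by rewrite prednK ?prime_gt0.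
rewrite exprS => h'; apply: (mulfI nz); by rewrite mulr1.
Qed.

Lemma fact_Fp_neq0 : ((p.-1)`!%:R : 'F_p) != 0.
Proof.
apply/eqP => h.
have : (p %| ((p.-1)`!).+1)%N by rewrite -Wilson ?prime_gt1.
by rewrite -natFp0 -natr1 h add0r oner_eq0.
Qed.

Definition Qn (k a b c : nat) := (k * k * a * b + k.+1 * c * c.-1)%N.

Lemma two_point (k c a b : nat) : (0 < k < p)%N -> (a.+2 < b)%N -> (b < p)%N ->
  ((Qn k a b c)%:R : 'F_p) != 0 \/ ((Qn k a.+1 b.-1 c)%:R : 'F_p) != 0.
Proof.
move=> hk hab hb.
case: (eqVneq ((Qn k a b c)%:R : 'F_p) 0) => h1; last by left.
case: (eqVneq ((Qn k a.+1 b.-1 c)%:R : 'F_p) 0) => h2; last by right.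
exfalso.
have hK := natFp_neq0 hk.
have hd : ((b - a.+1)%:R : 'F_p) != 0 by apply: natFp_neq0; lia.
have : ((Qn k a.+1 b.-1 c)%:R : 'F_p) - (Qn k a b c)%:R = (k%:R)^+2 * (b - a.+1)%:R.
  clear h1 h2; case: b hab hb hd => [|b] //= hab hb hd.
  rewrite /Qn !natrD !natrM natrB; last by lia.
  rewrite !mulrS; ring.
by rewrite h2 h1 subrr => /esym/eqP; rewrite mulf_eq0 expf_eq0 (negPf hK) (negPf hd).
Qed.

Lemma choose_abc (k : nat) : (7 <= p)%N -> (p + 2 <= 3 * k)%N -> (k <= p - 3)%N ->
  exists a b c, [/\ (2 <= a)%N, (2 <= b)%N, (2 <= c)%N, (a < b)%N & (b <= k.+1)%N] /\
    (a + b + c = p + 2)%N /\ (c <= k.+1)%N /\ ((Qn k a b c)%:R : 'F_p) != 0.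
Proof.
move=> hp7 hk1 hk2.
have hk : (0 < k < p)%N by lia.
have gen c a b : (2 <= a)%N -> (a.+2 < b)%N -> (b <= k.+1)%N -> (2 <= c <= k.+1)%N ->
    (a + b + c = p + 2)%N ->
    exists a b c, [/\ (2 <= a)%N, (2 <= b)%N, (2 <= c)%N, (a < b)%N & (b <= k.+1)%N] /\
    (a + b + c = p + 2)%N /\ (c <= k.+1)%N /\ ((Qn k a b c)%:R : 'F_p) != 0.
  move=> ha hab hb hc hs.
  have hb' : (b < p)%N by lia.
  have [h|h] := two_point c hk hab hb'.
  - exists a, b, c; split; first by split; lia.
    by split; [lia| split; [lia| done]].
  - exists a.+1, b.-1, c; split; first by split; lia.
    by split; [lia| split; [lia| done]].
case: (leqP (2 * k + 2) p) => hc1.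
  by apply: (gen k.+1 (p - 2 * k)%N k.+1); lia.
case: (leqP p (2 * k - 1)) => hc2.
  by apply: (gen 2%N (p - k - 1)%N k.+1); lia.
have hne : p <> (2 * k)%N.
  move=> e; have : (2 %| p)%N by rewrite e dvdn_mulr.
  by move/(prime_nt_dvdP hp (isT : 2 != 1)%N) => e2; rewrite -e2 in hp7.
have ep : p = (2 * k + 1)%N by lia.
case: (leqP 5 k) => hc3.
  by apply: (gen k.+1 2%N k); lia.
have ek : k = 3%N.
  have : k = 3%N \/ k = 4%N by lia.
  case=> // e4; move: hp; rewrite ep e4 => //.
subst k; exists 2%N, 3%N, 4%N; split; first by [].
split; first by lia.
split; first by [].
rewrite natFp0 ep /Qn /=; by [].
Qed.
End Fp.

Lemma Tnat (m a b c e1 e2 e3 : nat) : (e1 <= a)%N -> (e2 <= b)%N -> (e3 <= c)%N ->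
  (a + b + c = m + e1 + e2 + e3)%N ->
  ('C(m, c - e3) * 'C(m - (c - e3), b - e2) * (a`! * b`! * c`!) =
   m`! * (a ^_ e1 * b ^_ e2 * c ^_ e3))%N.
Proof.
move=> h1 h2 h3 hs.
rewrite -(ffact_fact h1) -(ffact_fact h2) -(ffact_fact h3).
have hi : (c - e3 <= m)%N by lia.
have hj : (b - e2 <= m - (c - e3))%N by lia.
have ea : (m - (c - e3) - (b - e2) = a - e1)%N by lia.
have E1 := bin_fact hi.
have E2 := bin_fact hj.
rewrite ea in E2.
rewrite -E1 -E2.
ring.
Qed.

Lemma subset_card (T : finType) (A : {set T}) n : (n <= #|A|)%N ->
  exists2 B : {set T}, B \subset A & #|B| = n.
Proof.
move=> hn; exists [set x in take n (enum A)].
  by apply/subsetP => x; rewrite inE => /mem_take; rewrite mem_enum.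
have u : uniq (take n (enum A)) by rewrite take_uniq ?enum_uniq.
by rewrite cardsE (card_uniqP u) size_takel // -cardE.
Qed.

Section Core.
Variable p : nat.
Hypothesis hp : prime p.

Lemma core (k : nat) (A : {set 'F_p}) : (7 <= p)%N -> (p + 2 <= 3 * k)%N -> (k <= p - 3)%N ->
  #|A| = k.+2 -> \sum_(x in A) x = 0 ->
  exists x y g, [/\ x \in A, y \in A, g \in A & [/\ x != y, x != g, y != g & x + y + g *+ k = 0]].
Proof.
move=> hp7 hk1 hk2 hA hS.
apply: NNPP => Hno.
have [a [b [c [[ha hb hc hab hbk] [hs [hck hQ]]]]]] := choose_abc hp hp7 hk1 hk2.
have [A1 sA1 cA1] := @subset_card _ A a.+1 (ltac:(lia)).
have [A2 sA2 cA2] := @subset_card _ A b.+1 (ltac:(lia)).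
have [A3 sA3 cA3] := @subset_card _ A c.+1 (ltac:(lia)).
set m := p.-1.
have hm : (m + 3 = p + 2)%N by rewrite /m; have := prime_gt1 hp; lia.
pose K : 'F_p := k%:R.
pose w x y z : 'F_p := x + y + z *+ k.
pose Tv (e1 e2 e3 : nat) : 'F_p :=
  ('C(m, c - e3) * 'C(m - (c - e3), b - e2))%:R * (k%:R) ^+ (c - e3).
have Z : LL A1 A2 A3 (fun x y z => (x - y) * (x - z) * (y - z) * (w x y z ^+ m - 1)) = 0.
  rewrite (@LL_ext _ A1 A2 A3 _ (fun _ _ _ => 0)); last first.
    move=> x y z xA yA zA.
    case: (eqVneq x y) => [->|nxy]; first by rewrite subrr !mul0r.
    case: (eqVneq x z) => [->|nxz]; first by rewrite subrr !(mul0r, mulr0).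
    case: (eqVneq y z) => [->|nyz]; first by rewrite subrr !(mul0r, mulr0).
    have nw : w x y z != 0.
      apply/eqP => hw; apply: Hno; exists x, y, z.
      split; first by apply: (subsetP sA1).
        by apply: (subsetP sA2).
        by apply: (subsetP sA3).
      by split.
    by rewrite /m fermat // subrr mulr0.
  by rewrite /LL big1 // => x _; rewrite big1 // => y _; rewrite big1 // => z _; rewrite mul0r.
have Gt e1 e2 e3 : (e1 <= 2)%N -> (e2 <= 2)%N -> (e3 <= 2)%N -> (e1 + e2 + e3 = 3)%N ->
    LL A1 A2 A3 (fun x y z => x ^+ e1 * y ^+ e2 * z ^+ e3 * w x y z ^+ m -
                              x ^+ e1 * y ^+ e2 * z ^+ e3) = Tv e1 e2 e3.
  move=> h1 h2 h3 h123.
  rewrite (@LL_sub _ A1 A2 A3 (fun x y z => x ^+ e1 * y ^+ e2 * z ^+ e3 * w x y z ^+ m)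
                  (fun x y z => x ^+ e1 * y ^+ e2 * z ^+ e3)).
  rewrite /w (LL_term k cA1 cA2 cA3) ?(LL_mono cA1 cA2 cA3); try lia.
  have -> : ((e1 == a) && (e2 == b) && (e3 == c)) = false.
    by apply/negbTE/negP => /andP[/andP[/eqP ? /eqP ?] /eqP ?]; lia.
  by rewrite subr0.
pose sg (t : nat * nat * nat * bool) : 'F_p := if t.2 then -1 else 1.
pose s := [:: (2, 1, 0, false); (1, 2, 0, true); (2, 0, 1, true); (1, 0, 2, false);
              (0, 2, 1, false); (0, 1, 2, true)]%N.
have E : LL A1 A2 A3 (fun x y z => (x - y) * (x - z) * (y - z) * (w x y z ^+ m - 1)) =
   Tv 2 1 0 - Tv 1 2 0 - Tv 2 0 1 + Tv 1 0 2 + Tv 0 2 1 - Tv 0 1 2.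
  rewrite (@LL_ext _ A1 A2 A3 _ (fun x y z => \sum_(t <- s) sg t *
     (x ^+ t.1.1.1 * y ^+ t.1.1.2 * z ^+ t.1.2 * w x y z ^+ m -
      x ^+ t.1.1.1 * y ^+ t.1.1.2 * z ^+ t.1.2))); last first.
    move=> x y z _ _ _; rewrite /s !big_cons big_nil /sg /=; ring.
  rewrite LL_sum /s !big_cons big_nil /=.
  rewrite !LL_scale !Gt //=.
  rewrite /sg /=; ring.
have Tf e1 e2 e3 : (e1 <= a)%N -> (e2 <= b)%N -> (e3 <= c)%N ->
    (a + b + c = m + e1 + e2 + e3)%N ->
    Tv e1 e2 e3 * (a`! * b`! * c`!)%:R =
    (m`!)%:R * ((a ^_ e1 * b ^_ e2 * c ^_ e3)%:R * K ^+ (c - e3)).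
  move=> h1 h2 h3 h4.
  rewrite /Tv mulrAC -natrM (@Tnat m a b c e1 e2 e3) // !natrM /K; ring.
have [c' ec] : exists c', c = c'.+2 by exists c.-2; lia.
have ff2 n : (n ^_ 2 = n * (n - 1))%N by rewrite ffactnSr ffactn1.
have hsum : (a%:R + b%:R + c%:R : 'F_p) = 2.
  by rewrite -!natrD hs natrD pchar_Fp_0 // add0r.
have D : (Tv 2 1 0 - Tv 1 2 0 - Tv 2 0 1 + Tv 1 0 2 + Tv 0 2 1 - Tv 0 1 2) *
         (a`! * b`! * c`!)%:R =
   (m`!)%:R * (K ^+ c' * ((a%:R - b%:R) * ((Qn k a b c)%:R -
       K * c%:R * (a%:R + b%:R + c%:R - 2)))).
  have -> : (Tv 2 1 0 - Tv 1 2 0 - Tv 2 0 1 + Tv 1 0 2 + Tv 0 2 1 - Tv 0 1 2) *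
         (a`! * b`! * c`!)%:R =
    Tv 2 1 0 * (a`! * b`! * c`!)%:R - Tv 1 2 0 * (a`! * b`! * c`!)%:R -
    Tv 2 0 1 * (a`! * b`! * c`!)%:R + Tv 1 0 2 * (a`! * b`! * c`!)%:R +
    Tv 0 2 1 * (a`! * b`! * c`!)%:R - Tv 0 1 2 * (a`! * b`! * c`!)%:R by ring.
  rewrite !Tf; try lia.
  rewrite !ff2 !ffactn1 !ffactn0 /Qn ec ?subSS ?subn0 /=.
  rewrite !natrD !natrM !natrB; try lia.
  rewrite /K !exprS; ring.
rewrite hsum subrr mulr0 subr0 in D.
move: D; rewrite -E Z mul0r => /esym/eqP.
rewrite !mulf_eq0 /m (negPf (fact_Fp_neq0 hp)) expf_eq0 (negPf (@natFp_neq0 p hp k _)); last by lia.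
rewrite andbF (negPf hQ) orbF /= subr_eq0.
have := @natFp_neq0 p hp (b - a)%N (ltac:(lia)).
rewrite natrB; last by lia.
move=> H /eqP h; move: H; by rewrite h subrr eqxx.
Qed.
End Core.

Section Up.
Variable p : nat.
Hypothesis hp : prime p.

Lemma upper (k : nat) (A : {set 'F_p}) : (7 <= p)%N -> (p + 2 <= 3 * k)%N -> (k <= p - 3)%N ->
  #|A| = k.+2 -> has_barycentric k A.
Proof.
move=> hp7 hk1 hk2 hA.
set S := \sum_(x in A) x.
have nn : (k.+2%:R : 'F_p) != 0 by apply: natFp_neq0; lia.
set t := S / k.+2%:R.
have tn : t *+ k.+2 = S by rewrite -mulr_natr /t divfK.
set A' := [set x + (- t) | x in A].
have cA' : #|A'| = k.+2 by rewrite card_imset //; apply: addIr.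
have sA' : \sum_(y in A') y = 0.
  rewrite big_imset /=; last by move=> x y _ _; apply: addIr.
  by rewrite big_split /= sumr_const hA -/S mulNrn tn subrr.
have [x' [y' [g' [xA yA gA [nxy nxg nyg e]]]]] := core hp hp7 hk1 hk2 cA' sA'.
case/imsetP: xA => x xA ex; case/imsetP: yA => y yA ey; case/imsetP: gA => g gA eg.
subst x' y' g'.
have nxy' : x != y by apply: contraNneq nxy => ->.
have nxg' : x != g by apply: contraNneq nxg => ->.
have nyg' : y != g by apply: contraNneq nyg => ->.
have e' : x + y + g *+ k = S.
  apply/eqP; rewrite -subr_eq0 -[X in _ - X]tn -(eqP (introT eqP e)); apply/eqP.
  rewrite mulrnDl mulNrn; ring.
apply/existsP; exists (A :\ x :\ y).
apply/andP; split.
  by apply/subsetP => z; rewrite !inE => /and3P[_ _ ->].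
apply/andP; split.
  apply/eqP.
  have h1 := cardsD1 x A; have h2 := cardsD1 y (A :\ x).
  rewrite xA hA /= in h1; rewrite !inE eq_sym nxy' yA /= in h2; by apply/eqP; move/eqP: h1; rewrite h2 !add1n !eqSS eq_sym.
apply/existsP; exists g; rewrite !inE eq_sym nyg' eq_sym nxg' gA /=.
have yAx : y \in A :\ x by rewrite !inE eq_sym nxy' yA.
apply/eqP; apply: (addrI (x + y)); rewrite e' /S (big_setD1 x xA) /=.
rewrite (big_setD1 y yAx) /=; ring.
Qed.
End Up.

Section Low.
Variable p : nat.
Hypothesis hp : prime p.

Lemma sum_natr (L : seq nat) : \sum_(n <- L) (n%:R : 'F_p) = (sumn L)%:R.
Proof. by elim: L => [|n L IH]; rewrite ?big_nil ?big_cons //= IH natrD. Qed.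

Lemma list_set (L : seq nat) : uniq L -> all (fun n => 0 < n < p)%N L -> (p %| sumn L)%N ->
  exists C : {set 'F_p}, [/\ 0 \notin C, #|C| = size L & \sum_(x in C) x = 0].
Proof.
move=> uL aL dL.
have inj : {in L &, injective (fun n => (n%:R : 'F_p))}.
  move=> n m nL mL e.
  have := val_Fp_nat hp n; rewrite e val_Fp_nat // => h.
  move/allP: (aL) => /(_ m mL) /andP[_ hm].
  move/allP: (aL) => /(_ n nL) /andP[_ hn].
  by rewrite !modn_small in h.
have uM : uniq [seq (n%:R : 'F_p) | n <- L] by rewrite map_inj_in_uniq.
exists [set x in [seq (n%:R : 'F_p) | n <- L]]; split.
- rewrite inE; apply/mapP => -[n nL e].
  move/allP: aL => /(_ n nL) h.
  by move: (natFp_neq0 hp h); rewrite -e eqxx.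
- by rewrite cardsE (card_uniqP uM) size_map.
- rewrite (eq_bigl (fun x => x \in [seq (n%:R : 'F_p) | n <- L])); last first.
    by move=> x; rewrite inE.
  rewrite -big_uniq // big_map sum_natr.
  by apply/eqP; rewrite natFp0.
Qed.

Definition base (u : nat) := [seq i.+1 | i <- iota 0 u] ++ [seq (p - i.+1)%N | i <- iota 0 u].

Lemma base_mem u n : (2 * u < p)%N -> n \in base u -> ((0 < n <= u) || (p - u <= n < p))%N.
Proof.
move=> hu; rewrite mem_cat => /orP[] /mapP[i]; rewrite mem_iota => hi ->; lia.
Qed.

Lemma base_uniq u : (2 * u < p)%N -> uniq (base u).
Proof.
move=> hu; rewrite cat_uniq; apply/and3P; split.
- by rewrite map_inj_uniq ?iota_uniq // => i j [].
- apply/hasPn => n /mapP[i]; rewrite mem_iota => hi ->.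
  apply/mapP => -[j]; rewrite mem_iota => hj; lia.
- rewrite map_inj_in_uniq ?iota_uniq // => i j; rewrite !mem_iota => hi hj; lia.
Qed.

Lemma base_sum u : (2 * u < p)%N -> sumn (base u) = (u * p)%N.
Proof.
move=> hu; rewrite sumn_cat !sumnE !big_map -big_split /=.
rewrite (eq_big_seq (fun _ => p)); last by move=> i; rewrite mem_iota => hi; lia.
by rewrite -{1}(subn0 u) sum_nat_const_nat subn0.
Qed.


Lemma zero_sum_set (s : nat) : (7 <= p)%N -> (2 <= s)%N -> (3 * s + 5 <= 2 * p)%N ->
  exists C : {set 'F_p}, [/\ 0 \notin C, #|C| = s & \sum_(x in C) x = 0].
Proof.
move=> hp7 hs2 hs.
have hsz u : size (base u) = (2 * u)%N by rewrite size_cat !size_map size_iota; lia.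
case/boolP: (odd s) => os.
- set t := s./2.
  have et : s = (2 * t).+1 by rewrite /t -{1}(odd_double_half s) os; lia.
  set u := t.-1.
  have hu : (2 * u < p)%N by lia.
  set L := base u ++ [:: t; t.+1; (p - (2 * t).+1)%N].
  have uL : uniq L.
    rewrite cat_uniq base_uniq //=; apply/and3P; split => //.
      apply/negP => /orP[hm|/orP[hm|/orP[hm|//]]]; move: (base_mem hu hm); lia.
    by rewrite !inE negb_or; apply/andP; split; apply/eqP; lia.
    by rewrite andbT inE; apply/eqP; lia.
  have aL : all (fun n => 0 < n < p)%N L.
    rewrite all_cat; apply/andP; split.
      by apply/allP => n hn; move: (base_mem hu hn); lia.
    rewrite /= !andbT; apply/and3P; split; lia.
  have dL : (p %| sumn L)%N.
    rewrite sumn_cat base_sum //=.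
    have -> : (u * p + (t + (t.+1 + (p - (2 * t).+1 + 0))) = u.+1 * p)%N by lia.
    by rewrite dvdn_mull.
  have [C [C0 Cc Cs]] := list_set uL aL dL.
  exists C; split => //; rewrite Cc size_cat hsz /=; lia.
- set u := s./2.
  have eu : s = (2 * u)%N by rewrite /u -{1}(odd_double_half s) (negPf os); lia.
  have hu : (2 * u < p)%N by lia.
  have aL : all (fun n => 0 < n < p)%N (base u).
    by apply/allP => n hn; move: (base_mem hu hn); lia.
  have dL : (p %| sumn (base u))%N by rewrite base_sum // dvdn_mull.
  have [C [C0 Cc Cs]] := list_set (base_uniq hu) aL dL.
  by exists C; split => //; rewrite Cc hsz.
Qed.

End Low.

Section Fin.
Variable p : nat.
Hypothesis hp : prime p.

Lemma sum_all : (7 <= p)%N -> \sum_(x : 'F_p) x = 0.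
Proof.
move=> hp7.
have e : \sum_(x : 'F_p) x = - \sum_(x : 'F_p) x.
  by rewrite {1}(reindex_inj oppr_inj) /= sumrN.
have h2 : (2%:R : 'F_p) != 0 by apply: natFp_neq0; lia.
have : (\sum_(x : 'F_p) x) * 2%:R == 0 by rewrite mulr_natr mulr2n {1}e addNr.
by rewrite mulf_eq0 (negPf h2) orbF => /eqP.
Qed.

Lemma lower (k : nat) : (7 <= p)%N -> (p + 2 <= 3 * k)%N -> (k <= p - 3)%N ->
  exists A : {set 'F_p}, #|A| = k /\ ~~ has_barycentric k A.
Proof.
move=> hp7 hk1 hk2.
have [C [C0 Cc Cs]] := @zero_sum_set p hp (p - 1 - k) hp7 (ltac:(lia)) (ltac:(lia)).
exists (~: (0 |: C)).
have cA : #|~: (0 |: C)| = k.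
  rewrite cardsCs setCK cardsU1 C0 Cc card_Fp //=; lia.
split => //.
have sA : \sum_(x in ~: (0 |: C)) x = 0.
  have := sum_all hp7; rewrite (bigID (fun x => x \in 0 |: C)) /=.
  rewrite big_setU1 //= add0r Cs add0r => e0.
  by rewrite -[RHS]e0; apply: eq_bigl => x; rewrite inE.
apply/negP => /existsP [B /andP [sB /andP[/eqP cB /existsP [g /andP [gB /eqP sg]]]]].
have eB : B = ~: (0 |: C) by apply/eqP; rewrite eqEcard sB cB cA /=.
subst B.
move: sg; rewrite sA => /esym/eqP; rewrite -mulr_natr mulf_eq0.
rewrite (negPf (@natFp_neq0 p hp k _)); last by lia.
rewrite orbF => /eqP g0; move: gB; by rewrite g0 !inE eqxx.
Qed.
End Fin.

Local Close Scope ring_scope.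
Theorem mainTheorem8 (p k : nat) (hp : prime p) (hp7 : 7 <= p)
  (hk1 : p + 2 <= 3 * k) (hk2 : k <= p - 3) :
  k + 1 <= BO 'Z_p k <= k + 2.
Proof.
rewrite -(Fp_Zcast hp) /BO; case: ex_minnP => l Hl Hmin.
apply/andP; split.
  rewrite leqNgt; apply/negP => hl.
  have [A [cA nb]] := lower hp hp7 hk1 hk2.
  move/forallP: Hl => /(_ A) /implyP; rewrite cA => /(_ (ltac:(lia))).
  by rewrite (negPf nb).
apply: Hmin; apply/forallP => A; apply/implyP => hA.
have [A0 sA0 cA0] := @subset_card _ A k.+2 (ltac:(lia)).
have := upper hp hp7 hk1 hk2 cA0.
move=> /existsP [B /andP [sB bB]].
apply/existsP; exists B; rewrite bB andbT.
exact: subset_trans sB sA0.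
Qed.
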